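(* Let $\mathbb{K}\in\{\mathbb{R},\mathbb{C}\}$, $\star\in\{*,T\}$, $\epsilon_1,\epsilon_2\in\{1,-1\}$, and let $Q(\lambda)=\lambda^2M+\lambda D+K\in\mathbb{K}^{n\times n}[\lambda]$ satisfy $M^\star=\epsilon_1M$, $D^\star=\epsilon_2D$, $K^\star=\epsilon_1K$. Suppose $(X_c,\Lambda_c)\in\mathbb{K}^{n\times p_1}\times\mathbb{K}^{p_1\times p_1}$ and $(X_f,\Lambda_f)\in\mathbb{K}^{n\times p_2}\times\mathbb{K}^{p_2\times p_2}$ are invariant pairs of $Q(\lambda)$. Let $\Lambda_a\in\mathbb{K}^{p_1\times p_1}$ and put $S=X_c^\star MX_c\Lambda_c+\epsilon_1\epsilon_2\Lambda_c^\star X_c^\star MX_c+X_c^\star DX_c$. Assume that (1) $\sigma(\Lambda_c)\cap\sigma(\epsilon_1\epsilon_2\Lambda_f^\star)=\emptyset$, and (2) $R:=X_c^\star MX_c\Lambda_a+\epsilon_1\epsilon_2\Lambda_c^\star X_c^\star MX_c+X_c^\star DX_c$ is nonsingular. Let $Z=(\Lambda_c-\Lambda_a)R^{-1}$ and $\triangle M=MX_cZX_c^\star M$, $\triangle D=\epsilon_1\epsilon_2MX_cZ\Lambda_c^\star X_c^\star M+MX_cZX_c^\star D+MX_c\Lambda_cZX_c^\star M+DX_cZX_c^\star M$, $\triangle K=\epsilon_1\epsilon_2MX_c\Lambda_cZ\Lambda_c^\star X_c^\star M+MX_c\Lambda_cZX_c^\star D+\epsilon_1\epsilon_2DX_cZ\Lambda_c^\star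 X_c^\star M+DX_cZX_c^\star D$. Then $(X_c,\Lambda_a)$ and $(X_f,\Lambda_f)$ are invariant pairs of $Q_\triangle(\lambda)=\lambda^2(M+\triangle M)+\lambda(D+\triangle D)+(K+\triangle K)\in\mathbb{K}^{n\times n}[\lambda]$. Moreover, if $S\Lambda_a=\epsilon_1(S\Lambda_a)^\star$, then $(M+\triangle M)^\star=\epsilon_1(M+\triangle M)$, $(D+\triangle D)^\star=\epsilon_2(D+\triangle D)$ and $(K+\triangle K)^\star=\epsilon_1(K+\triangle K)$.
   Context: For a matrix $A$, $A^*$ is the conjugate transpose and $A^T$ the transpose; $A^\star$ means $A^*$ if $\star=*$ and $A^T$ if $\star=T$. $\sigma(A)$ is the spectrum of a square matrix $A$. A pair $(X,\Lambda)\in\mathbb{K}^{n\times p}\times\mathbb{K}^{p\times p}$ is an invariant pair of $Q(\lambda)=\lambda^2M+\lambda D+K$ if $Q(X,\Lambda):=MX\Lambda^2+DX\Lambda+KX=0$. *)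

(* Defs.v *)
From HB Require Import structures.
From mathcomp Require Import all_boot all_order all_algebra.
From mathcomp Require Import reals.
From mathcomp.real_closed Require Import complex.
Set Implicit Arguments. Unset Strict Implicit. Unset Printing Implicit Defensive.
Import Order.TTheory GRing.Theory Num.Theory.
Local Open Scope ring_scope.

Inductive star_kind := StarConj | StarTr.

Definition mxstar (F : fieldType) (conj : F -> F) (s : star_kind) (m n : nat)
  (A : 'M[F]_(m, n)) : 'M[F]_(n, m) :=
  match s with StarConj => map_mx conj A^T | StarTr => A^T end.

Definition invariant_pair (F : fieldType) (n p : nat) (M D K : 'M[F]_n)
  (X : 'M[F]_(n, p)) (L : 'M[F]_p) : Prop :=
  M *m X *m (L *m L) + D *m X *m L + K *m X = 0.

Definition spec_disjointC (R : rcfType) (p q : nat) (A : 'M[R[i]]_p) (B : 'M[R[i]]_q) :=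
  forall z : R[i], ~ (eigenvalue A z /\ eigenvalue B z).

(* for real matrices, sigma(A) is the set of complex eigenvalues *)
Definition spec_disjointR (R : rcfType) (p q : nat) (A : 'M[R]_p) (B : 'M[R]_q) :=
  spec_disjointC (map_mx (fun x : R => real_complex R x) A) (map_mx (fun x : R => real_complex R x) B).

Definition theorem3p6_over (F : fieldType) (conj : F -> F)
  (sdisj : forall p q : nat, 'M[F]_p -> 'M[F]_q -> Prop) : Prop :=
  forall (s : star_kind) (e1 e2 : F) (n p1 p2 : nat)
    (M D K : 'M[F]_n) (Xc : 'M[F]_(n, p1)) (Lc La : 'M[F]_p1)
    (Xf : 'M[F]_(n, p2)) (Lf : 'M[F]_p2),
  let st m k (A : 'M[F]_(m, k)) := mxstar conj s A in
  (e1 = 1 \/ e1 = -1) -> (e2 = 1 \/ e2 = -1) ->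
  st _ _ M = e1 *: M -> st _ _ D = e2 *: D -> st _ _ K = e1 *: K ->
  invariant_pair M D K Xc Lc -> invariant_pair M D K Xf Lf ->
  let S := st _ _ Xc *m M *m Xc *m Lc + (e1 * e2) *: (st _ _ Lc *m st _ _ Xc *m M *m Xc)
           + st _ _ Xc *m D *m Xc in
  let Rm := st _ _ Xc *m M *m Xc *m La + (e1 * e2) *: (st _ _ Lc *m st _ _ Xc *m M *m Xc)
           + st _ _ Xc *m D *m Xc in
  sdisj p1 p2 Lc ((e1 * e2) *: st _ _ Lf) ->
  Rm \in unitmx ->
  let Z := (Lc - La) *m invmx Rm in
  let dM := M *m Xc *m Z *m st _ _ Xc *m M in
  let dD := (e1 * e2) *: (M *m Xc *m Z *m st _ _ Lc *m st _ _ Xc *m M)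
            + M *m Xc *m Z *m st _ _ Xc *m D
            + M *m Xc *m Lc *m Z *m st _ _ Xc *m M
            + D *m Xc *m Z *m st _ _ Xc *m M in
  let dK := (e1 * e2) *: (M *m Xc *m Lc *m Z *m st _ _ Lc *m st _ _ Xc *m M)
            + M *m Xc *m Lc *m Z *m st _ _ Xc *m D
            + (e1 * e2) *: (D *m Xc *m Z *m st _ _ Lc *m st _ _ Xc *m M)
            + D *m Xc *m Z *m st _ _ Xc *m D in
  [/\ invariant_pair (M + dM) (D + dD) (K + dK) Xc La,
      invariant_pair (M + dM) (D + dD) (K + dK) Xf Lf &
      S *m La = e1 *: st _ _ (S *m La) ->
        [/\ st _ _ (M + dM) = e1 *: (M + dM),
            st _ _ (D + dD) = e2 *: (D + dD) &
            st _ _ (K + dK) = e1 *: (K + dK)]].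

(* Main.v *)
Require Import Defs.
From HB Require Import structures.
From mathcomp Require Import all_boot all_order all_algebra.
From mathcomp Require Import reals ring.
From mathcomp.real_closed Require Import complex.
Import GRing.Theory.
Local Open Scope ring_scope.

Section St.
Variables (F : fieldType) (conj : {rmorphism F -> F}) (s : star_kind).
Hypothesis conjK : involutive conj.
Local Notation st := (mxstar conj s).

Lemma stM m n p (A : 'M[F]_(m,n)) (B : 'M[F]_(n,p)) : st (A *m B) = st B *m st A.
Proof. by case: s => /=; rewrite trmx_mul // map_mxM. Qed.
Lemma stD m n (A B : 'M[F]_(m,n)) : st (A + B) = st A + st B.
Proof. by case: s => /=; rewrite linearD //= map_mxD. Qed.
Lemma stB m n (A B : 'M[F]_(m,n)) : st (A - B) = st A - st B.
Proof. by case: s => /=; rewrite linearB //= map_mxB. Qed.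
Lemma stZ m n a (A : 'M[F]_(m,n)) : conj a = a -> st (a *: A) = a *: st A.
Proof. by case: s => /= h; rewrite linearZ //= map_mxZ h. Qed.
Lemma stK m n (A : 'M[F]_(m,n)) : st (st A) = A.
Proof.
case: s => /=; last by rewrite trmxK.
by rewrite map_trmx trmxK -map_mx_comp map_mx_id // => x /=; rewrite conjK.
Qed.
Lemma st1 m : st (1%:M : 'M[F]_m) = 1%:M.
Proof. by case: s => /=; rewrite trmx1 // map_mx1. Qed.
End St.
Lemma st0 (F : fieldType) (conj : {rmorphism F -> F}) s m n : mxstar conj s (0 : 'M[F]_(m,n)) = 0.
Proof. by case: s => /=; rewrite trmx0 // map_mx0. Qed.

Lemma sAl (F : fieldType) m n p (a : F) (A : 'M_(m, n)) (B : 'M_(n, p)) : a *: A *m B = a *: (A *m B).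
Proof. by rewrite scalemxAl. Qed.
Lemma sAr (F : fieldType) m n p (a : F) (A : 'M_(m, n)) (B : 'M_(n, p)) : A *m (a *: B) = a *: (A *m B).
Proof. by rewrite scalemxAr. Qed.
Lemma addr_cong (V : nmodType) (a b x : V) : a = b -> a + x = b + x.
Proof. by move=> ->. Qed.

Ltac mnorm := rewrite ?(mulmxDl, mulmxDr, mulmxBl, mulmxBr, mulNmx, mulmxN, scalerDr, scalerBr, scalerN, sAl, sAr, scalerA, mulmxA).
Ltac ac :=
  rewrite ?addrA;
  repeat match goal with
  | |- ?l + ?x = ?r =>
      (try rewrite [in RHS](addrC x)); (repeat rewrite [in RHS](addrAC _ x)); apply: addr_cong
  end; reflexivity.


Lemma key_id (F : fieldType) (ep : F) n p1 p (M D K : 'M[F]_n) (Xc : 'M_(n,p1)) (Xs : 'M_(p1,n)) (Lc Ls Z : 'M_p1)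
  (X : 'M_(n,p)) (L : 'M_p) :
  (M + M *m Xc *m Z *m Xs *m M) *m X *m (L *m L) +
  (D + (ep *: (M *m Xc *m Z *m Ls *m Xs *m M)
            + M *m Xc *m Z *m Xs *m D
            + M *m Xc *m Lc *m Z *m Xs *m M
            + D *m Xc *m Z *m Xs *m M)) *m X *m L +
  (K + (ep *: (M *m Xc *m Lc *m Z *m Ls *m Xs *m M)
            + M *m Xc *m Lc *m Z *m Xs *m D
            + ep *: (D *m Xc *m Z *m Ls *m Xs *m M)
            + D *m Xc *m Z *m Xs *m D)) *m X =
  (M *m X *m (L *m L) + D *m X *m L + K *m X) +
  (M *m Xc *m (Z *m (Xs *m M *m X *m L + ep *: (Ls *m Xs *m M *m X) + Xs *m D *m X)) *m L
   + (M *m Xc *m Lc + D *m Xc) *m (Z *m (Xs *m M *m X *m L + ep *: (Ls *m Xs *m M *m X) + Xs *m D *m X))).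
Proof. mnorm; ac. Qed.

Ltac snorm := rewrite ?(mul1r, mulr1, mulN1r, mulrN1, opprK, scale1r, scaleN1r, mulmxDl, mulmxDr, mulmxBl, mulmxBr, mulNmx, mulmxN, opprD, scalerDr, scalerBr, scalerN, sAl, sAr, scalerA, mulmxA).

Lemma main (F : fieldType) (conj : {rmorphism F -> F}) sdisj :
  involutive conj ->
  (forall p q (A : 'M[F]_p) (B : 'M[F]_q) Y, sdisj p q A B -> B *m Y = Y *m A -> Y = 0) ->
  theorem3p6_over conj sdisj.
Proof.
move=> cK hsyl s e1 e2 n p1 p2 M D K Xc Lc La Xf Lf st he1 he2 hM hD hK hc hf S Rm hdisj hR Z dM dD dK.
have ce1 : conj e1 = e1 by case: he1 => ->; rewrite ?rmorph1 ?rmorphN1.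
have ce2 : conj e2 = e2 by case: he2 => ->; rewrite ?rmorph1 ?rmorphN1.
have cep : conj (e1 * e2) = e1 * e2 by rewrite rmorphM ce1 ce2.
have e11 : e1 * e1 = 1 by case: he1 => ->; rewrite ?mulr1 ?mulrNN ?mulr1.
have e22 : e2 * e2 = 1 by case: he2 => ->; rewrite ?mulr1 ?mulrNN ?mulr1.
have eep : (e1 * e2) * (e1 * e2) = 1 by rewrite mulrACA e11 e22 mulr1.
have stM' : forall m k l (A : 'M_(m,k)) (B : 'M_(k,l)), st _ _ (A *m B) = st _ _ B *m st _ _ A.
  by move=> *; apply: stM.
have stD' : forall m k (A B : 'M_(m,k)), st _ _ (A + B) = st _ _ A + st _ _ B.
  by move=> *; apply: stD.
have stB' : forall m k (A B : 'M_(m,k)), st _ _ (A - B) = st _ _ A - st _ _ B.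
  by move=> *; apply: stB.
have stK' : forall m k (A : 'M_(m,k)), st _ _ (st _ _ A) = A.
  by move=> *; apply: stK.
have stZe : forall m k (A : 'M_(m,k)), st _ _ ((e1 * e2) *: A) = (e1 * e2) *: st _ _ A.
  by move=> *; apply: stZ.
have st0' : forall m k, st m k 0 = 0 by move=> *; apply: st0.
have st1' : forall m, st m m 1%:M = 1%:M by move=> *; apply: st1.
have hS : forall p (X : 'M_(n,p)) (L : 'M_p), invariant_pair M D K X L ->
   let Y := st _ _ Xc *m M *m X *m L + (e1 * e2) *: (st _ _ Lc *m st _ _ Xc *m M *m X) + st _ _ Xc *m D *m X in
   Y *m L = (e1 * e2) *: (st _ _ Lc *m Y).
  move=> p X L hX Y.
  have hfs := congr1 (mulmx (st _ _ Xc)) hX.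
  rewrite mulmx0 in hfs; move: hfs; mnorm => hfs.
  have hcs := congr1 (fun A => st _ _ A *m X) hc.
  move: hcs; rewrite /= st0' mul0mx !stD' !stM' hM hD hK; mnorm => hcs.
  have hA : st _ _ Xc *m M *m X *m L *m L + st _ _ Xc *m D *m X *m L = - (st _ _ Xc *m K *m X).
    by apply/eqP; rewrite -addr_eq0 hfs.
  have hB : st _ _ Lc *m st _ _ Lc *m st _ _ Xc *m M *m X + (e1 * e2) *: (st _ _ Lc *m st _ _ Xc *m D *m X) = - (st _ _ Xc *m K *m X).
    apply/eqP; rewrite -addr_eq0; have := congr1 (fun v => e1 *: v) hcs.
    by rewrite /= scaler0 !scalerDr !scalerA e11 !scale1r => ->.
  rewrite /Y; mnorm; rewrite eep scale1r addrAC hA -addrA hB addrC.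
  done.
have keyZ : forall p (X : 'M_(n,p)) (L : 'M_p),
  (M + dM) *m X *m (L *m L) + (D + dD) *m X *m L + (K + dK) *m X =
  (M *m X *m (L *m L) + D *m X *m L + K *m X) +
  (M *m Xc *m (Z *m (st _ _ Xc *m M *m X *m L + (e1 * e2) *: (st _ _ Lc *m st _ _ Xc *m M *m X) + st _ _ Xc *m D *m X)) *m L
   + (M *m Xc *m Lc + D *m Xc) *m (Z *m (st _ _ Xc *m M *m X *m L + (e1 * e2) *: (st _ _ Lc *m st _ _ Xc *m M *m X) + st _ _ Xc *m D *m X))).
  by move=> p X L; exact: key_id.
have hZR : Z *m Rm = Lc - La by rewrite /Z -mulmxA mulVmx // mulmx1.
split.
- rewrite /invariant_pair keyZ -/Rm hZR.
  rewrite /invariant_pair in hc.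
  have eLc : Lc = La + (Lc - La) by rewrite addrC subrK.
  move: (Lc - La) eLc => W eW.
  rewrite eW in hc *; rewrite -hc; mnorm; ac.
- have h1 := hS _ _ _ hf; cbv zeta in h1.
  set Y := (X in X *m Lf = _) in h1.
  have h2 : (e1 * e2) *: st _ _ Lf *m st _ _ Y = st _ _ Y *m Lc.
    by rewrite sAl -stM' h1 stZe scalerA eep scale1r stM' stK'.
  have h3 := hsyl _ _ _ _ _ hdisj h2.
  have hY : Y = 0 by rewrite -[Y]stK' h3 st0'.
  by rewrite /invariant_pair keyZ hf -/Y hY !mulmx0 mul0mx add0r addr0.
move=> hSLa.
have hSLc : S *m Lc = (e1 * e2) *: (st _ _ Lc *m S) by exact: (hS _ _ _ hc).
have hT : st _ _ (st _ _ Xc *m M *m Xc) = e1 *: (st _ _ Xc *m M *m Xc).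
  by rewrite !stM' !stK' hM; mnorm.
have hSst : st _ _ S = e2 *: S.
  rewrite /S !stD' stZe !stM' !stK' hM hD.
  case: he1 => E1; case: he2 => E2; rewrite ?E1 ?E2; snorm; ac.
have hSLa' : S *m La = (e1 * e2) *: (st _ _ La *m S).
  by rewrite {1}hSLa stM' hSst sAr scalerA.
have eLc : Lc = La + (Lc - La) by rewrite addrC subrK.
have hSR : S = Rm + (st _ _ Xc *m M *m Xc) *m (Lc - La).
  rewrite /S /Rm; move: (Lc - La) eLc => W eW.
  rewrite {1}eW; mnorm; ac.
have hRm : Rm = S - (st _ _ Xc *m M *m Xc) *m (Lc - La) by rewrite hSR addrK.
have hDS : st _ _ (Lc - La) *m S = (e1 * e2) *: (S *m (Lc - La)).
  by rewrite stB' mulmxBl mulmxBr scalerBr hSLc hSLa' !scalerA eep !scale1r.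
have hd : st _ _ (Lc - La) *m Rm = e1 *: (st _ _ Rm *m (Lc - La)).
  rewrite hRm [st _ _ (S - _)]stB' stM' hSst hT.
  clearbody S. move: (Lc - La) hDS => W hW.
  mnorm; rewrite hW e11 scale1r. done.
have hZst : st _ _ Z = e1 *: Z.
  rewrite /Z stM'.
  transitivity (st _ _ (invmx Rm) *m (st _ _ (Lc - La) *m Rm) *m invmx Rm).
    by rewrite -!mulmxA mulmxV // mulmx1.
  by rewrite hd sAr sAl mulmxA -stM' mulmxV // st1' mul1mx.
clearbody Z.
split.
- rewrite /dM stD' !stM' !stK' hM hZst.
  case: he1 => E1; case: he2 => E2; rewrite ?E1 ?E2; snorm; ac.
- rewrite /dD !stD' !stZe !stM' !stK' hM hD hZst.
  case: he1 => E1; case: he2 => E2; rewrite ?E1 ?E2; snorm; ac.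
- rewrite /dK !stD' !stZe !stM' !stK' hM hD hK hZst.
  case: he1 => E1; case: he2 => E2; rewrite ?E1 ?E2; snorm; ac.
Qed.

Lemma sylv (F : closedFieldType) p q (A : 'M[F]_p) (B : 'M[F]_q) (Y : 'M[F]_(q,p)) :
 (forall z, ~ (eigenvalue A z /\ eigenvalue B z)) -> B *m Y = Y *m A -> Y = 0.
Proof.
case: p A Y => [|p] A Y H E; first by rewrite thinmx0.
case: q B Y H E => [|q] B Y H E; first by rewrite flatmx0.
have comm: forall r : {poly F}, horner_mx B r *m Y = Y *m horner_mx A r.
  elim/poly_ind => [|r c IH]; first by rewrite !rmorph0 mul0mx mulmx0.
  rewrite !rmorphD !rmorphM /= !horner_mx_X !horner_mx_C mulmxDl mulmxDr.
  rewrite mul_scalar_mx mul_mx_scalar; congr (_ + _).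
  by rewrite -[_ * B]/(_ *m B) -[_ * A]/(_ *m A) -mulmxA E !mulmxA IH.
have cop: coprimep (char_poly A) (char_poly B).
  rewrite coprimep_def; apply/negPn; apply/negP => /closed_rootP[x].
  by rewrite root_gcd -!eigenvalue_root_char => /andP[h1 h2]; apply: (H x).
case/Bezout_eq1_coprimepP: cop => [[u v]] /= huv.
have := congr1 (horner_mx B) huv.
rewrite rmorphD !rmorphM /= Cayley_Hamilton mulr0 addr0 rmorph1 => h.
transitivity ((horner_mx B u * horner_mx B (char_poly A)) *m Y); first by rewrite h mul1mx.
by rewrite -[_ * _]/(_ *m _) -mulmxA comm Cayley_Hamilton !mulmx0.
Qed.

Theorem theorem3p6 (R : realType) :
  theorem3p6_over (@conjc R) (@spec_disjointC R)
  /\ theorem3p6_over (fun x : R => x) (@spec_disjointR R).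
Proof.
split.
  apply: (@main _ (@conjc R : {rmorphism R[i] -> R[i]}) _); first exact: conjcK.
  move=> p q A B Y h E; exact: (@sylv _ _ _ _ _ _ h E).
apply: (@main _ (idfun : {rmorphism R -> R}) _) => // p q A B Y h E.
have E' := congr1 (map_mx (real_complex R)) E.
rewrite !map_mxM in E'.
have := @sylv _ _ _ _ _ _ h E'.
by move/eqP; rewrite map_mx_eq0 => /eqP.
Qed.
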